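(* Let $0\leq B<1$, $q\geq3$, $\Delta\geq3$, $d=\Delta-1$, and let $(R_1,\dots,R_q,C_1,\dots,C_q)$ be a positive solution of the system \[R_i\propto\Big(BC_i+\sum_{j\neq i}C_j\Big)^{d},\qquad C_j\propto\Big(BR_j+\sum_{i\neq j}R_i\Big)^{d}\qquad(i,j\in[q]).\] Let $t_R$ be the number of distinct values among $R_1,\dots,R_q$ and $t_C$ the number of distinct values among $C_1,\dots,C_q$. Then $t_R,t_C\leq3$ and $t_R=t_C$.
   Context: Proportionality constants in the system are independent of $i$ (resp. $j$). This is the tree recursion fixpoint system of the antiferromagnetic $q$-state Potts model with parameter $B$ ($B=0$: colorings). *)

(* Defs.v *)
From HB Require Import structures.
From mathcomp Require Import all_boot all_order all_algebra.
From mathcomp Require Import reals.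
Set Implicit Arguments. Unset Strict Implicit. Unset Printing Implicit Defensive.
Import Order.TTheory GRing.Theory Num.Theory.
Local Open Scope ring_scope.

Definition nvals (K : eqType) (q : nat) (x : 'I_q -> K) : nat :=
  size (undup [seq x i | i <- enum 'I_q]).

Definition potts_fixpoint (K : realType) (q d : nat) (B : K)
    (R C : 'I_q -> K) : Prop :=
  (exists a : K, 0 < a /\ forall i : 'I_q,
      R i = a * (B * C i + \sum_(j < q | j != i) C j) ^+ d) /\
  (exists b : K, 0 < b /\ forall j : 'I_q,
      C j = b * (B * R j + \sum_(i < q | i != j) R i) ^+ d).

(* Main.v *)
Require Import Defs.
From HB Require Import structures.
From mathcomp Require Import all_boot all_order all_algebra.
From mathcomp Require Import reals.
From mathcomp Require Import polyrcf ring lra.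
Import Order.TTheory GRing.Theory Num.Theory.
Local Open Scope ring_scope.

Section Core.
Variable R : rcfType.

Lemma Pder (d : nat) (SC SR k1 k2 w : R) :
  let Q := SR%:P - k2 *: 'X^d in
  let P := SC%:P - k1 *: Q^+d - 'X in
  P.[w] = SC - k1 * (SR - k2 * w^+d)^+d - w /\
  P^`().[w] = k1 * k2 * (d%:R)^+2 * (w * (SR - k2*w^+d))^+(d.-1) - 1.
Proof.
move=> Q P; split; first by rewrite /P /Q !hornerE.
rewrite /P /Q !derivE deriv_exp !derivE !(hornerD, hornerN, hornerZ, hornerM, hornerMn, horner_exp, hornerC, hornerXn, hornerX, hornerC) exprMn; have E : forall x : R, x *+ d = x * d%:R by move=> x; rewrite mulr_natr. 
rewrite 2!E. ring. Qed.



Lemma Psi (d : nat) (SR k2 w : R) :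
  let Q := SR%:P - k2 *: 'X^d in
  ('X * Q).[w] = w * (SR - k2 * w^+d) /\
  ('X * Q)^`().[w] = SR - k2 * (d.+1)%:R * w^+d.
Proof.
move=> Q; rewrite /Q; clear Q; split; first by rewrite !hornerE.
rewrite !derivE !(hornerD, hornerN, hornerZ, hornerM, hornerMn, hornerC, hornerXn, hornerX, hornerC).
have E : forall x : R, x *+ d = x * d%:R by move=> x; rewrite mulr_natr.
rewrite E -addn1 natrD. case: d E => [|n] _ /=; rewrite ?exprS; ring.
Qed.

Lemma core d (SC SR k1 k2 x1 x2 x3 x4 : R) : (1 < d)%N -> 0 < k1 -> 0 < k2 ->
  0 < x1 -> x1 < x2 -> x2 < x3 -> x3 < x4 -> 0 < SR - k2 * x4 ^+ d ->
  (forall x, x \in [:: x1; x2; x3; x4] -> SC - k1 * (SR - k2 * x ^+ d) ^+ d - x = 0) ->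
  False.
Proof.
move=> d1 k1p k2p x1p l12 l23 l34 Q4 Hx.
set Q := SR%:P - k2 *: 'X^d.
set P := SC%:P - k1 *: Q^+d - 'X.
have P0 : forall x, x \in [:: x1; x2; x3; x4] -> P.[x] = 0.
  by move=> x /Hx; have [-> _] := Pder d SC SR k1 k2 x.
have rol : forall a b, a \in [:: x1; x2; x3; x4] -> b \in [:: x1; x2; x3; x4] -> a < b ->
   {c | a < c < b & P^`().[c] = 0}.
  move=> a b ha hb lab; have [c] := poly_rolle lab (etrans (P0 a ha) (esym (P0 b hb))).
  by rewrite in_itv /=; exists c.
have m1 : x1 \in [:: x1; x2; x3; x4] by rewrite !inE eqxx.
have m2 : x2 \in [:: x1; x2; x3; x4] by rewrite !inE eqxx !orbT.
have m3 : x3 \in [:: x1; x2; x3; x4] by rewrite !inE eqxx !orbT.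
have m4 : x4 \in [:: x1; x2; x3; x4] by rewrite !inE eqxx !orbT.
have [w1 /andP[a1 b1] e1] := rol x1 x2 m1 m2 l12.
have [w2 /andP[a2 b2] e2] := rol x2 x3 m2 m3 l23.
have [w3 /andP[a3 b3] e3] := rol x3 x4 m3 m4 l34.
have dom : forall w, x1 < w -> w < x4 -> 0 < w /\ 0 < SR - k2 * w ^+ d.
  move=> w h1 h2; have wp : 0 < w by apply: lt_trans h1.
  split => //; apply: (lt_le_trans Q4); rewrite lerD2l lerN2 ler_pM2l //.
  by rewrite ltW // ltrXn2r ?ltW // -lt0n (ltn_trans _ d1).
set g := fun w => w * (SR - k2 * w ^+ d).
have gp : forall w, x1 < w -> w < x4 -> 0 <= g w.
  by move=> w h1 h2; have [p1 p2] := dom w h1 h2; rewrite /g mulr_ge0 // ltW.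
have gk : forall w, P^`().[w] = 0 -> (g w)^+(d.-1) = (k1 * k2 * (d%:R)^+2)^-1.
  move=> w; have [_ ->] := Pder d SC SR k1 k2 w; move/eqP; rewrite subr_eq0 => /eqP h.
  have kn : k1 * k2 * (d%:R)^+2 != 0.
    have d0 : (0:R) < d%:R by rewrite ltr0n (ltn_trans _ d1).
    by rewrite !mulf_neq0 ?gt_eqF ?exprn_gt0.
  by apply: (mulfI kn); rewrite mulfV // -h /g.
have dn : (0 < d.-1)%N by case: (d) d1 => [|[|n]].
have g12 : g w1 = g w2.
  apply/eqP; rewrite -(eqrXn2 dn) ?(gp w1) ?(gp w2) ?gk //; try lra.
have g23 : g w2 = g w3.
  apply/eqP; rewrite -(eqrXn2 dn) ?(gp w3) ?(gp w2) ?gk //; try lra.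
have rol2 : forall a b, x1 < a -> a < b -> b < x4 -> g a = g b ->
   {c | a < c < b & SR - k2 * (d.+1)%:R * c ^+ d = 0}.
  move=> a b ha lab hb gab.
  have [pa _] := Psi d SR k2 a. have [pb _] := Psi d SR k2 b.
  have [c] := poly_rolle lab (etrans pa (etrans gab (esym pb))).
  rewrite in_itv /= => /andP[c1 c2]; have [_ pc] := Psi d SR k2 c.
  by exists c; rewrite ?c1 ?c2 // -pc.
have h1 : w1 < w2 by lra.
have h2 : w2 < x4 by lra.
have h3 : x1 < w2 by lra.
have h4 : w2 < w3 by lra.
have h5 : w3 < x4 by lra.
have [z1 /andP[c1 c2] f1] := rol2 w1 w2 a1 h1 h2 g12.
have [z2 /andP[c3 c4] f2] := rol2 w2 w3 h3 h4 h5 g23.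
have : z1 ^+ d = z2 ^+ d.
  have kn : k2 * (d.+1)%:R != 0 by rewrite mulf_neq0 ?gt_eqF.
  apply: (mulfI kn); lra.
have : z1 ^+ d < z2 ^+ d.
  have z1p : 0 <= z1 by lra.
  have zz : z1 < z2 by lra.
  by rewrite ltrXn2r // -lt0n (ltn_trans _ d1).
by move=> hh1 hh2; rewrite hh2 ltxx in hh1.
Qed.
End Core.

Lemma nvals_eq (K1 K2 : eqType) q (x : 'I_q -> K1) (y : 'I_q -> K2) :
  (forall i j, (x i == x j) = (y i == y j)) -> nvals x = nvals y.
Proof.
move=> H; rewrite /nvals; elim: (enum 'I_q) => [|a s IH] //=.
have -> : (x a \in [seq x i | i <- s]) = (y a \in [seq y i | i <- s]).
  apply/mapP/mapP => -[b bs e]; exists b => //; apply/eqP.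
    by rewrite -H e.
  by rewrite H e.
by case: ifP => _ //=; rewrite IH.
Qed.

Lemma nvals_le3 (K : realType) q (x : 'I_q -> K) :
  (forall i1 i2 i3 i4, x i1 < x i2 -> x i2 < x i3 -> x i3 < x i4 -> False) ->
  (nvals x <= 3)%N.
Proof.
move=> H; rewrite /nvals; set s := undup _.
rewrite leqNgt; apply/negP => hs.
set t := sort <=%O s.
have st : sorted <%O t by rewrite lt_sorted_uniq_le sort_uniq undup_uniq sort_sorted //; exact: le_total.
have sz : (3 < size t)%N by rewrite size_sort.
have inn : forall k, (k < size t)%N -> exists i, nth 0 t k = x i.
  move=> k hk; have : nth 0 t k \in s by rewrite -(mem_sort <=%O) mem_nth.
  by rewrite mem_undup => /mapP [i _ ->]; exists i.
have lt : forall k l, (k < l)%N -> (l < size t)%N -> nth 0 t k < nth 0 t l.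
  move=> k l kl lt; apply: (sorted_ltn_nth lt_trans) => //.
  by rewrite inE (ltn_trans kl).
have [i1 e1] := inn 0%N (ltn_trans (isT : (0 < 3)%N) sz).
have [i2 e2] := inn 1%N (ltn_trans (isT : (1 < 3)%N) sz).
have [i3 e3] := inn 2%N (ltn_trans (isT : (2 < 3)%N) sz).
have [i4 e4] := inn 3%N sz.
apply: (H i1 i2 i3 i4); rewrite -?e1 -?e2 -?e3 -?e4 lt //; exact: ltn_trans _ sz.
Qed.

Lemma sum_split (K : realType) q (B : K) (x : 'I_q -> K) i :
  B * x i + \sum_(j < q | j != i) x j = \sum_(j < q) x j - (1 - B) * x i.
Proof. rewrite [X in _ = X - _](bigD1 i) //=; ring. Qed.

Lemma sum_pos (K : realType) q (B : K) (x : 'I_q -> K) i :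
  (2 <= q)%N -> 0 <= B -> (forall j, 0 < x j) ->
  0 < \sum_(j < q) x j - (1 - B) * x i.
Proof.
move=> hq hB hx; rewrite -sum_split.
have [j ji] : exists j : 'I_q, j != i.
  have h0 : (0 < q)%N by apply: ltn_trans hq.
  have h1 : (1 < q)%N by [].
  case: (eqVneq i (Ordinal h0)) => e.
    by exists (Ordinal h1); rewrite e; apply/eqP => -[].
  by exists (Ordinal h0); rewrite eq_sym.
rewrite (bigD1 j) //=.
have : 0 <= \sum_(k < q | (k != i) && (k != j)) x k by apply: sumr_ge0 => k _; apply: ltW.
have := hx j; have := hx i; have : 0 <= B * x i by rewrite mulr_ge0 // ltW.
lra.
Qed.

Theorem lemma28 (K : realType) (B : K) (q Delta : nat) (R C : 'I_q -> K) :
  0 <= B -> B < 1 -> (3 <= q)%N -> (3 <= Delta)%N ->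
  (forall i, 0 < R i) -> (forall j, 0 < C j) ->
  @potts_fixpoint K q (Delta - 1)%N B R C ->
  [/\ (nvals R <= 3)%N, (nvals C <= 3)%N & nvals R = nvals C].
Proof.
move=> hB0 hB1 hq hD hR hC [[a [ha HR]] [b [hb HC]]].
set d := (Delta - 1)%N.
have d1 : (1 < d)%N by rewrite /d; case: (Delta) hD => [|[|[|n]]].
have d0 : (0 < d)%N by apply: ltn_trans d1.
set e := 1 - B.
have he : 0 < e by rewrite /e; lra.
have hq2 : (2 <= q)%N by apply: ltn_trans hq.
set SC := \sum_(j < q) C j.
set SR := \sum_(j < q) R j.
pose u i := SC - e * C i.
pose v i := SR - e * R i.
have up : forall i, 0 < u i by move=> i; exact: sum_pos.
have vp : forall i, 0 < v i by move=> i; exact: sum_pos.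
have HR' : forall i, R i = a * u i ^+ d by move=> i; rewrite HR sum_split.
have HC' : forall i, C i = b * v i ^+ d by move=> i; rewrite HC sum_split.
have Cu : forall i j, (C i == C j) = (u i == u j).
  move=> i j; rewrite /u; apply/eqP/eqP => [-> //|h].
  apply: (mulfI (negbT (gt_eqF he))); lra.
have RC : forall i j, (R i == R j) = (C i == C j).
  move=> i j; rewrite Cu !HR' (inj_eq (mulfI (negbT (gt_eqF ha)))) eqrXn2 // ltW //.
have eqRC : nvals R = nvals C by apply: nvals_eq.
have C3 : (nvals C <= 3)%N.
  rewrite (@nvals_eq _ _ _ C u Cu); apply: nvals_le3 => i1 i2 i3 i4 l12 l23 l34.
  apply: (@core K d SC SR (e * b) (e * a) (u i1) (u i2) (u i3) (u i4) d1) => //;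
    try (by rewrite mulr_gt0).
  - have -> : SR - e * a * u i4 ^+ d = v i4 by rewrite /v HR'; ring.
    exact: vp.
  - move=> x; rewrite !inE => /or4P [] /eqP ->;
    match goal with |- context [u ?i ^+ d] =>
      have -> : SR - e * a * u i ^+ d = v i by rewrite /v HR'; ring end;
    rewrite -mulrA -HC' /u; ring.
by split => //; rewrite eqRC.
Qed.
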